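(* Let $(G_n)_{n\in\mathbb{N}}$ be an iteratively constructible family (an $F$-iteration family of $k$-graphs). Then: (1) the families $(G_{\binom{n}{2}})_{n\in\mathbb{N}}$ and $(G_{n^2})_{n\in\mathbb{N}}$ are bi-iteratively constructible (namely an $(id,F,id)$-bi-iteration family and an $(id,F^2,F)$-bi-iteration family, respectively); (2) for every $c\in\mathbb{N}^{+}$ and $d,e\in\mathbb{Z}$ there exists $r\in\mathbb{N}$ such that the family $H_n=G_{c(n+r)^2+d(n+r)+e}$, $n\in\mathbb{N}$, is bi-iteratively constructible.
   Context: A $k$-graph is $G=(V,E;R_1,\dots,R_k)$ where $(V,E)$ is a finite simple graph (its underlying graph) and $R_1,\dots,R_k$ (the labels, possibly empty) partition $V$. Basic operations on $k$-graphs: $Add_i$ adds a new isolated vertex to $R_i$; $\rho_{i\to j}$ moves all vertices of $R_i$ into $R_j$, leaving $R_i$ empty; $\eta_{i,j}$ adds all edges between $R_i$ and $R_j$; for $b\in\mathbb{N}$, $\eta^b_{i,j}$ acts as $\eta_{i,j}$ if $|R_i\cup R_j|\le b$ and otherwise does nothing; $\delta_{i,j}$ removes all edges between $R_i$ and $R_j$. An elementary operation is a finite composition of basic operations; $id$ is the empty composition. A sequence of $k$-graphs is an $F$-iteration family if $G_{n+1}=F(G_n)$ for all $n$ ($G_0$ a $k$-graph, $F$ elementary), and an $(H,F,L)$-bi-iteration family if $G_{n+1}=H(F^n(L(G_n)))$ for all $n$, $F^n$ denoting $n$-fold application. A sequence of graphs is (bi-)iteratively constructible if for some $k$ it is the sequence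 of underlying graphs of an iteration (resp. bi-iteration) family of $k$-graphs. *)

(* Defs.v *)
From HB Require Import structures.
From mathcomp Require Import all_boot all_order all_algebra.
Set Implicit Arguments. Unset Strict Implicit. Unset Printing Implicit Defensive.

(* A k-graph: vertices are 0, ..., nv-1; label of vertex u is lab u
   (the label classes R_0,...,R_{k-1} partition the vertex set);
   adj is the adjacency relation of the underlying simple graph.
   Values of lab/adj outside the vertex set are irrelevant junk,
   constrained by kgraph_wf. *)
Record kgraph := KGraph { nv : nat; lab : nat -> nat; adj : nat -> nat -> bool }.

Definition kgraph_wf (k : nat) (G : kgraph) : Prop :=
  [/\ (forall u, u < nv G -> lab G u < k),
      (forall u v, adj G u v = adj G v u),
      (forall u, ~~ adj G u u)
    & (forall u v, adj G u v -> u < nv G)].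

Definition inR (G : kgraph) (i u : nat) : bool := (u < nv G) && (lab G u == i).

Definition between (G : kgraph) (i j u v : nat) : bool :=
  (inR G i u && inR G j v) || (inR G j u && inR G i v).

Definition card_union (G : kgraph) (i j : nat) : nat :=
  count (fun u => inR G i u || inR G j u) (iota 0 (nv G)).

Inductive basic_op :=
  | OAdd of nat
  | ORel of nat & nat
  | OEta of nat & nat
  | OEtaB of nat & nat & nat
  | ODel of nat & nat.

Definition op_add (i : nat) (G : kgraph) : kgraph :=
  KGraph (nv G).+1 (fun u => if u == nv G then i else lab G u) (adj G).

Definition op_rel (i j : nat) (G : kgraph) : kgraph :=
  KGraph (nv G) (fun u => if inR G i u then j else lab G u) (adj G).

Definition op_eta (i j : nat) (G : kgraph) : kgraph :=
  KGraph (nv G) (lab G) (fun u v => adj G u v || ((u != v) && between G i j u v)).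

Definition op_etab (b i j : nat) (G : kgraph) : kgraph :=
  if card_union G i j <= b then op_eta i j G else G.

Definition op_del (i j : nat) (G : kgraph) : kgraph :=
  KGraph (nv G) (lab G) (fun u v => adj G u v && ~~ between G i j u v).

Definition apply_basic (o : basic_op) (G : kgraph) : kgraph :=
  match o with
  | OAdd i => op_add i G
  | ORel i j => op_rel i j G
  | OEta i j => op_eta i j G
  | OEtaB b i j => op_etab b i j G
  | ODel i j => op_del i j G
  end.

Definition basic_valid (k : nat) (o : basic_op) : bool :=
  match o with
  | OAdd i => i < k
  | ORel i j | OEta i j | OEtaB _ i j | ODel i j => (i < k) && (j < k)
  end.

Definition elem_op := seq basic_op.
Definition elem_valid (k : nat) (F : elem_op) : bool := all (basic_valid k) F.
Definition apply_elem (F : elem_op) (G : kgraph) : kgraph := foldl (fun H o => apply_basic o H) G F.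
Definition id_op : elem_op := [::].

Definition iteration_family (k : nat) (F : elem_op) (G : nat -> kgraph) : Prop :=
  [/\ kgraph_wf k (G 0), elem_valid k F & forall n, G n.+1 = apply_elem F (G n)].

Definition bi_iteration_family (k : nat) (H F L : elem_op) (G : nat -> kgraph) : Prop :=
  [/\ kgraph_wf k (G 0), elem_valid k H, elem_valid k F, elem_valid k L &
      forall n, G n.+1 = apply_elem H (iter n (apply_elem F) (apply_elem L (G n)))].

Definition underlying_iso (G1 G2 : kgraph) : Prop :=
  exists f : 'I_(nv G1) -> 'I_(nv G2),
    bijective f /\ forall u v : 'I_(nv G1), adj G1 u v = adj G2 (f u) (f v).

Definition bi_iteratively_constructible (S : nat -> kgraph) : Prop :=
  exists (k : nat) (H F L : elem_op) (G : nat -> kgraph),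
    bi_iteration_family k H F L G /\ forall n, underlying_iso (G n) (S n).

(* Main.v *)
Require Import Defs.
From HB Require Import structures.
From mathcomp Require Import all_boot all_order all_algebra.
From mathcomp Require Import zify ring lra.
Import GRing.Theory Num.Theory.
Set Implicit Arguments.

Lemma between_sym G i j u v : between G i j u v = between G i j v u.
Proof. by rewrite /between; case: (inR G i u) (inR G j v) (inR G j u) (inR G i v) => [] [] [] []. Qed.

Lemma between_lt G i j u v : between G i j u v -> u < nv G.
Proof. by rewrite /between /inR; case/orP=> /andP[/andP[]]. Qed.

Lemma wf_basic k o G : basic_valid k o -> kgraph_wf k G -> kgraph_wf k (apply_basic o G).
Proof.
move=> + [Hl Hs Hi Hb]; case: o => /=.
- move=> i ik; split=> //= [u|u v /Hb]; last by lia.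
  move=> hu; case: eqP => // hne; apply: Hl; lia.
- move=> i j /andP[ik jk]; split=> //= u; case: ifP => // _ /Hl //.
- move=> i j _; split=> //= [u v|u|u v].
  + by rewrite Hs between_sym eq_sym.
  + by rewrite (negbTE (Hi u)) eqxx.
  + by case/orP=> [/Hb//|/andP[_ /between_lt]].
- move=> b i j _; rewrite /op_etab; case: ifP=> // _; split=> //= [u v|u|u v].
  + by rewrite Hs between_sym eq_sym.
  + by rewrite (negbTE (Hi u)) eqxx.
  + by case/orP=> [/Hb//|/andP[_ /between_lt]].
- move=> i j _; split=> //= [u v|u|u v].
  + by rewrite Hs between_sym.
  + by rewrite (negbTE (Hi u)).
  + by case/andP=> /Hb.
Qed.

Lemma wf_elem k F G : elem_valid k F -> kgraph_wf k G -> kgraph_wf k (apply_elem F G).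
Proof.
elim: F G => //= o F IH G /andP[ho hF] hG; rewrite /apply_elem /=.
by apply: IH => //; apply: wf_basic.
Qed.

Lemma apply_cat F1 F2 G : apply_elem (F1 ++ F2) G = apply_elem F2 (apply_elem F1 G).
Proof. by rewrite /apply_elem foldl_cat. Qed.

Fixpoint fpow (F : elem_op) m : elem_op := if m is m'.+1 then fpow F m' ++ F else [::].

Lemma fpowE F m G : apply_elem (fpow F m) G = iter m (apply_elem F) G.
Proof. by elim: m => //= m IH; rewrite apply_cat IH. Qed.

Lemma fpow_valid k F m : elem_valid k F -> elem_valid k (fpow F m).
Proof. by move=> h; elim: m => //= m IH; rewrite /elem_valid all_cat; apply/andP. Qed.

Lemma Gshift k F G : iteration_family k F G -> forall a b, G (a + b) = iter a (apply_elem F) (G b).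
Proof. by case=> _ _ h; elim=> //= a IH b; rewrite addSn h IH. Qed.

Lemma Gwf k F G : iteration_family k F G -> forall n, kgraph_wf k (G n).
Proof.
move=> hI n; have [h0 hv _] := hI; rewrite -(addn0 n) (Gshift hI).
by elim: n => //= n IH; apply: wf_elem.
Qed.

Lemma iter_pow k F G : iteration_family k F G -> forall m n b,
  iter n (apply_elem (fpow F m)) (G b) = G (n * m + b).
Proof.
move=> hI m; elim=> //= n IH b; rewrite IH fpowE -(Gshift hI).
by rewrite mulSn addnA.
Qed.
Lemma nonneg (c : nat) (d e : int) (m : nat) : 0 < c -> (`|d|%N + `|e|%N + 1 <= m)%N ->
  (0 <= c%:Z * (m%:Z ^+ 2) + d * m%:Z + e)%R.
Proof. move=> hc hm. nia. Qed.

Lemma step (c : nat) (d e : int) (r n : nat) :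
  (c%:Z * ((n.+1 + r)%:Z ^+ 2) + d * (n.+1 + r)%:Z + e =
   (c%:Z * ((n + r)%:Z ^+ 2) + d * (n + r)%:Z + e) + (n * (2 * c))%:Z + (2 * c%:Z * r%:Z + c%:Z + d))%R.
Proof. rewrite !PoszD !PoszM /=. ring. Qed.
Theorem mainTheorem13 (k : nat) (F : elem_op) (G : nat -> kgraph) :
  iteration_family k F G ->
  (bi_iteration_family k id_op F id_op (fun n => G 'C(n, 2)) /\
   bi_iteration_family k id_op (F ++ F) F (fun n => G (n ^ 2))) /\
  (forall (c : nat) (d e : int), 0 < c ->
     exists r : nat,
       (forall n : nat,
          (0 <= c%:Z * ((n + r)%:Z ^+ 2) + d * (n + r)%:Z + e)%R) /\
       bi_iteratively_constructible
         (fun n => G `|(c%:Z * ((n + r)%:Z ^+ 2) + d * (n + r)%:Z + e)%R|%N)).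
Proof.
move=> hI; have [h0 hv hs] := hI.
have wf := Gwf hI; have sh := Gshift hI.
split; first split.
- split=> //= n; rewrite /apply_elem /= -/(apply_elem F) -sh.
  by rewrite (binS n 1) bin1 addnC.
- split=> //= [|n]; first by rewrite /elem_valid all_cat; apply/andP.
  have E : forall m b, iter m (apply_elem (F ++ F)) (G b) = G (m * 2 + b).
    elim=> //= m IH b; rewrite IH apply_cat -!hs; congr G; lia.
  rewrite -hs E.
  congr G; lia.
move=> c d e hc; exists (`|d|%N + `|e|%N + 1); split.
  by move=> n; apply: nonneg => //; lia.
set r := (`|d|%N + `|e|%N + 1).
pose f n := (c%:Z * ((n + r)%:Z ^+ 2) + d * (n + r)%:Z + e)%R.
pose s := `|(2 * c%:Z * r%:Z + c%:Z + d)%R|%N.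
have fpos n : (0 <= f n)%R by apply: nonneg => //; lia.
have spos : (0 <= 2 * c%:Z * r%:Z + c%:Z + d)%R by rewrite /r; nia.
exists k, id_op, (fpow F (2 * c)), (fpow F s), (fun n => G `|f n|%N); split.
  split=> //; try exact: fpow_valid.
  move=> n /=; rewrite fpowE -sh (iter_pow hI).
  have H := step c d e r n; rewrite -/(f n.+1) -/(f n) in H.
  congr G; apply/eqP; rewrite -eqz_nat !PoszD (gez0_abs (fpos n.+1)) (gez0_abs (fpos n)).
  rewrite /s (gez0_abs spos) H; apply/eqP; ring.
move=> n; exists (fun x => x); split=> //; by exists id.
Qed.
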